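(* Let $\mathbf A$ be the adjacency matrix of a directed stochastic block model with edge-probability matrix $\mathbf P$, and for distinct $i_1,i_2\in[n]$ let $$M(i_1,i_2)=\frac1{n-2}\left|\sum_{j\in[n]\setminus\{i_1,i_2\}}(A_{i_1j}-P_{i_1j})(A_{i_2j}-P_{i_2j})\right|.$$ Then for any $\epsilon_m>0$, $$\mathbb P\left(\max_{i_1\ne i_2}M(i_1,i_2)<\epsilon_m\right)\ge1-n(n-1)\exp\left(-\frac{\frac12(n-2)\epsilon_m^2}{1+\frac13\epsilon_m}\right),$$ and, for $n\ge4$, the right-hand side is at least $1-n(n-1)\exp\left(-\frac{\frac14n\epsilon_m^2}{1+\epsilon_m}\right)$.
   Context: Model: nodes $[n]$, $K_n$ communities, community-probability vector $\boldsymbol\rho$, block matrix $\mathbf B\in[0,1]^{K_n\times K_n}$, sparsity factor $\gamma_n\in(0,1]$. Labels $Z_1,\dots,Z_n$ i.i.d. Categorical$(\boldsymbol\rho)$, $\pi(i)=Z_i$. Conditionally on the labels, $A_{ij}$ ($i\ne j$) are independent Bernoulli$(\gamma_nB_{\pi(i)\pi(j)})$, $A_{ii}=0$; $\mathbf A$ need not be symmetric. $P_{ij}=\gamma_nB_{\pi(i)\pi(j)}$ for all $i,j$. *)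

(* Defs.v *)
From HB Require Import structures.
From mathcomp Require Import all_boot all_order all_algebra.
From mathcomp Require Import all_classical all_reals all_analysis.
Set Implicit Arguments. Unset Strict Implicit. Unset Printing Implicit Defensive.
Import Order.TTheory GRing.Theory Num.Theory.
Local Open Scope ring_scope.

(* An outcome of the directed SBM: community labels z (pi(i) = z i)
   and the adjacency matrix A, encoded as a boolean function on pairs. *)
Definition sbm_outcome (n K : nat) : finType :=
  ({ffun 'I_n -> 'I_K} * {ffun 'I_n * 'I_n -> bool})%type.

Definition Pmat {R : realType} (n K : nat) (B : 'I_K -> 'I_K -> R) (gamma : R)
  (z : {ffun 'I_n -> 'I_K}) (i j : 'I_n) : R := gamma * B (z i) (z j).

Definition Aent {R : realType} (n : nat) (A : {ffun 'I_n * 'I_n -> bool})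
  (i j : 'I_n) : R := (A (i, j))%:R.

(* Joint probability mass function of (labels, adjacency):
   labels i.i.d. Categorical(rho); conditionally on labels, off-diagonal
   entries independent Bernoulli(P_ij); diagonal entries are 0. *)
Definition sbm_pmf {R : realType} (n K : nat) (rho : 'I_K -> R)
  (B : 'I_K -> 'I_K -> R) (gamma : R) (w : sbm_outcome n K) : R :=
  let z := w.1 in let A := w.2 in
  (\prod_(i : 'I_n) rho (z i)) *
  \prod_(ij : 'I_n * 'I_n)
     (if ij.1 == ij.2 then (~~ A ij)%:R
      else if A ij then Pmat B gamma z ij.1 ij.2
      else 1 - Pmat B gamma z ij.1 ij.2).

Definition sbm_prob {R : realType} (n K : nat) (rho : 'I_K -> R)
  (B : 'I_K -> 'I_K -> R) (gamma : R) (E : pred (sbm_outcome n K)) : R :=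
  \sum_(w | E w) sbm_pmf rho B gamma w.

Definition Mstat {R : realType} (n K : nat) (B : 'I_K -> 'I_K -> R) (gamma : R)
  (w : sbm_outcome n K) (i1 i2 : 'I_n) : R :=
  (n - 2)%:R^-1 *
  `| \sum_(j : 'I_n | (j != i1) && (j != i2))
       (Aent w.2 i1 j - Pmat B gamma w.1 i1 j) *
       (Aent w.2 i2 j - Pmat B gamma w.1 i2 j) |.

Definition maxM_lt {R : realType} (n K : nat) (B : 'I_K -> 'I_K -> R) (gamma : R)
  (eps : R) : pred (sbm_outcome n K) :=
  fun w => [forall i1 : 'I_n, forall i2 : 'I_n,
              (i1 != i2) ==> (Mstat B gamma w i1 i2 < eps)].

(* Main.v *)
Require Import Defs.
From HB Require Import structures.
From mathcomp Require Import all_boot all_order all_algebra.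
From mathcomp Require Import all_classical all_reals all_analysis.
From mathcomp Require Import ring lra zify.
Import Order.TTheory GRing.Theory Num.Theory.
Local Open Scope ring_scope.

Section Gen.
Variable R : realType.

Lemma L1 (I : finType) (F : I -> bool -> R) :
  \sum_(c : {ffun I -> bool}) \prod_i F i (c i) = \prod_i \sum_b F i b.
Proof. by rewrite bigA_distr_bigA. Qed.

Lemma L1' (I : finType) (q : I -> bool -> R) (i1 i2 : I) (g h : bool -> R) :
  i1 != i2 -> (forall i, \sum_b q i b = 1) ->
  \sum_(c : {ffun I -> bool}) (\prod_i q i (c i)) * (g (c i1) * h (c i2))
  = (\sum_b q i1 b * g b) * (\sum_b q i2 b * h b).
Proof.
move=> Hne Hq.
pose f i b := q i b * (if i == i1 then g b else if i == i2 then h b else 1).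
have E c : (\prod_i q i (c i)) * (g (c i1) * h (c i2)) = \prod_i f i (c i).
  rewrite /f big_split /=; congr (_ * _).
  rewrite (bigD1 i1) //= eqxx (bigD1 i2) //=; last by rewrite eq_sym.
  rewrite eq_sym (negbTE Hne) eqxx big1 ?mulr1 //.
  by move=> i /andP[/negbTE -> /negbTE ->].
under eq_bigr do rewrite E.
rewrite L1 (bigD1 i1) //= (bigD1 i2) //=; last by rewrite eq_sym.
rewrite [X in _ * (_ * X)]big1 ?mulr1.
  rewrite /f. congr (_ * _); apply: eq_bigr => b _.
    by rewrite eqxx.
  by rewrite eq_sym (negbTE Hne) eqxx.
move=> i /andP[/negbTE H2 /negbTE H1].
by rewrite -[RHS](Hq i); apply: eq_bigr => b _; rewrite /f H1 H2 mulr1.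
Qed.

Lemma expR_le_quad {y : R} : y <= 2^-1 -> expR y <= 1 + y + 2 * y ^+ 2.
Proof.
move=> hy.
have h1 := expR_ge1Dx (- y).
have hpos : 0 < 1 - y by lra.
have -> : expR y = (expR (- y))^-1 by rewrite expRN invrK.
have hq : 1 <= (1 - y) * (1 + y + 2 * y ^+ 2).
  have : 0 <= y ^+ 2 * (1 - 2 * y) by apply: mulr_ge0; [apply: sqr_ge0| lra].
  have -> : (1 - y) * (1 + y + 2 * y ^+ 2) = 1 + y ^+ 2 * (1 - 2 * y) by ring.
  move=> h; lra.
rewrite -[X in X <= _]mul1r ler_pdivrMr; last exact: expR_gt0.
apply: (le_trans hq); rewrite mulrC; apply: ler_wpM2l.
  have := sqr_ge0 (y + 4^-1); nra.
by [].
Qed.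


Definition qf {I : finType} (p : I -> I -> R) (i j : I) (b : bool) : R :=
  if i == j then (~~ b)%:R else if b then p i j else 1 - p i j.

Section Q.
Variables (I : finType) (p : I -> I -> R).
Hypothesis hp : forall i j, 0 <= p i j <= 1.

Lemma qf_ge0 i j b : 0 <= qf p i j b.
Proof.
have := hp i j; rewrite /qf; case: (i == j); case: b => /= /andP[h0 h1] //; lra.
Qed.

Lemma qf_sum i j : \sum_b qf p i j b = 1.
Proof. rewrite big_bool /qf; case: (i == j) => /=; [lra|lra]. Qed.

Lemma qf_mean i j : i != j -> \sum_b qf p i j b * (b%:R - p i j) = 0.
Proof. move=> /negbTE h; rewrite big_bool /qf h /=; ring. Qed.

Lemma qf_var i j : i != j -> 0 <= \sum_b qf p i j b * (b%:R - p i j) ^+ 2 <= 4^-1.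
Proof.
move=> /negbTE h; rewrite big_bool /qf h /=.
have := hp i j => /andP[h0 h1].
have -> : p i j * (1 - p i j) ^+ 2 + (1 - p i j) * (0 - p i j) ^+ 2 = p i j * (1 - p i j) by ring.
apply/andP; split; first nra.
have := sqr_ge0 (p i j - 2^-1); nra.
Qed.

Lemma col_bound (i1 i2 j : I) (lam : R) :
  i1 != i2 -> j != i1 -> j != i2 -> `|lam| <= 2^-1 ->
  \sum_(c : {ffun I -> bool}) (\prod_i qf p i j (c i)) *
     expR (lam * (((c i1)%:R - p i1 j) * ((c i2)%:R - p i2 j)))
  <= 1 + lam ^+ 2 / 8.
Proof.
move=> h12 hj1 hj2 hlam.
set u := fun b : bool => b%:R - p i1 j.
set v := fun b : bool => b%:R - p i2 j.
have hu b : `|u b| <= 1.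
  have := hp i1 j => /andP[h0 h1]; rewrite ler_norml /u; case: b => /=; lra.
have hv b : `|v b| <= 1.
  have := hp i2 j => /andP[h0 h1]; rewrite ler_norml /v; case: b => /=; lra.
apply: (@le_trans _ _ (\sum_(c : {ffun I -> bool}) (\prod_i qf p i j (c i)) *
   (1 * 1 + lam * (u (c i1) * v (c i2)) + (2 * lam ^+ 2) * ((u (c i1)) ^+ 2 * (v (c i2)) ^+ 2)))).
  apply: ler_sum => c _; apply: ler_wpM2l; first by apply: prodr_ge0 => i _; exact: qf_ge0.
  have hy : lam * (u (c i1) * v (c i2)) <= 2^-1.
    apply: (le_trans (ler_norm (lam * (u (c i1) * v (c i2))))).
    rewrite !normrM; apply: le_trans hlam.
    rewrite -[X in _ <= X]mulr1; apply: ler_wpM2l => //.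
    rewrite -[1]mulr1; apply: ler_pM => //.
  apply: (le_trans (expR_le_quad hy)).
  by rewrite le_eqVlt; apply/orP; left; apply/eqP; ring.
have E (c : {ffun I -> bool}) : (\prod_i qf p i j (c i)) *
   (1 * 1 + lam * (u (c i1) * v (c i2)) + (2 * lam ^+ 2) * ((u (c i1)) ^+ 2 * (v (c i2)) ^+ 2))
   = (\prod_i qf p i j (c i)) * (1 * 1) + lam * ((\prod_i qf p i j (c i)) * (u (c i1) * v (c i2)))
     + (2 * lam ^+ 2) * ((\prod_i qf p i j (c i)) * ((fun b => u b ^+ 2) (c i1) * (fun b => v b ^+ 2) (c i2))).
  by rewrite /=; ring.
under eq_bigr do rewrite E.
rewrite !big_split /= -!mulr_sumr.
have qs : forall i, \sum_b qf p i j b = 1 by move=> i; exact: qf_sum.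
rewrite (@L1' I (fun i b => qf p i j b) i1 i2 (fun=> 1) (fun=> 1) h12 qs).
rewrite (@L1' I (fun i b => qf p i j b) i1 i2 u v h12 qs).
rewrite (@L1' I (fun i b => qf p i j b) i1 i2 (fun b => u b ^+ 2) (fun b => v b ^+ 2) h12 qs).
have m1 : \sum_b qf p i1 j b * u b = 0 by apply: qf_mean; rewrite eq_sym.
have v1 := @qf_var i1 j ltac:(by rewrite eq_sym).
have v2 := @qf_var i2 j ltac:(by rewrite eq_sym).
rewrite /u /v in m1 *.
under eq_bigr do rewrite mulr1.
rewrite qs m1 mul0r mulr0 addr0.
move: v1 v2 => /andP[a0 a1] /andP[b0 b1].
set a := \sum_b _ in a0 a1 *.
set b := \sum_b _ in b0 b1 *.
have : a * b <= 4^-1 * 4^-1 by apply: ler_pM.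
have := sqr_ge0 lam.
have qs1 : \sum_b qf p i2 j b * 1 = 1 by under eq_bigr do rewrite mulr1; exact: qs.
rewrite qs1; set l := lam ^+ 2; move=> hl hab.
have : 0 <= l * (4^-1 * 4^-1 - a * b) by apply: mulr_ge0 => //; lra.
lra.
Qed.


Lemma inner_bound (i1 i2 : I) (lam : R) : i1 != i2 -> `|lam| <= 2^-1 ->
  \sum_(A : {ffun I * I -> bool}) (\prod_(ij : I * I) qf p ij.1 ij.2 (A ij)) *
    expR (lam * \sum_(j | (j != i1) && (j != i2))
                  ((A (i1, j))%:R - p i1 j) * ((A (i2, j))%:R - p i2 j))
  <= \prod_(j | (j != i1) && (j != i2)) (1 + lam ^+ 2 / 8).
Proof.
move=> h12 hlam.
pose h (C : {ffun I -> {ffun I -> bool}}) : {ffun I * I -> bool} := [ffun ij => C ij.2 ij.1].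
pose g (A : {ffun I * I -> bool}) : {ffun I -> {ffun I -> bool}} := [ffun j => [ffun i => A (i, j)]].
have hK : cancel g h by move=> A; apply/ffunP => -[i j]; rewrite !ffunE.
have gK : cancel h g by move=> C; apply/ffunP => j; apply/ffunP => i; rewrite !ffunE.
rewrite (reindex h); last by exists g => x _.
pose H j (c : {ffun I -> bool}) := (\prod_i qf p i j (c i)) *
   (if (j != i1) && (j != i2) then expR (lam * (((c i1)%:R - p i1 j) * ((c i2)%:R - p i2 j))) else 1).
have E C : (\prod_(ij : I * I) qf p ij.1 ij.2 (h C ij)) *
    expR (lam * \sum_(j | (j != i1) && (j != i2))
                  ((h C (i1, j))%:R - p i1 j) * ((h C (i2, j))%:R - p i2 j))
    = \prod_j H j (C j).
  rewrite /H big_split /=; congr (_ * _).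
    under eq_bigr do rewrite ffunE.
    by rewrite [RHS]exchange_big /= pair_bigA.
  rewrite mulr_sumr expR_sum big_mkcond /=; apply: eq_bigr => j _.
  by rewrite /h !ffunE.
under eq_bigr do rewrite E.
have -> : \sum_(C : {ffun I -> {ffun I -> bool}}) \prod_j H j (C j)
          = \prod_j \sum_(c : {ffun I -> bool}) H j c by rewrite bigA_distr_bigA.
rewrite [X in _ <= X]big_mkcond /=; apply: ler_prod => j _; apply/andP; split.
  apply: sumr_ge0 => c _; apply: mulr_ge0.
    by apply: prodr_ge0 => i _; exact: qf_ge0.
  by case: ifP => _ //; apply: ltW; exact: expR_gt0.
rewrite /H; case: ifP => hj.
  by move/andP: hj => [hj1 hj2]; exact: col_bound.
under eq_bigr do rewrite mulr1.
rewrite (@L1 I (fun i b => qf p i j b)) big1 // => i _; exact: qf_sum.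
Qed.

End Q.

End Gen.
Arguments qf {R I}.


Section SBM.
Variables (R : realType) (n K : nat) (rho : 'I_K -> R) (B : 'I_K -> 'I_K -> R) (gamma : R).
Hypotheses (rho_ge0 : forall k, 0 <= rho k) (rho_sum1 : \sum_(k : 'I_K) rho k = 1)
  (B_ge0 : forall k l, 0 <= B k l) (B_le1 : forall k l, B k l <= 1)
  (gamma_gt0 : 0 < gamma) (gamma_le1 : gamma <= 1).

Definition Ssum (w : sbm_outcome n K) (i1 i2 : 'I_n) : R :=
  \sum_(j : 'I_n | (j != i1) && (j != i2))
       (Aent w.2 i1 j - Pmat B gamma w.1 i1 j) * (Aent w.2 i2 j - Pmat B gamma w.1 i2 j).

Lemma split_sum (F : sbm_outcome n K -> R) :
  \sum_(w : sbm_outcome n K) F w = \sum_(z : {ffun 'I_n -> 'I_K}) \sum_(A : {ffun 'I_n * 'I_n -> bool}) F (z, A).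
Proof. rewrite pair_bigA; apply: eq_bigr => -[z A] _. by []. Qed.

Lemma pmf_eq (w : sbm_outcome n K) : sbm_pmf rho B gamma w =
  (\prod_i rho (w.1 i)) * \prod_(ij : 'I_n * 'I_n) qf (Pmat B gamma w.1) ij.1 ij.2 (w.2 ij).
Proof. by []. Qed.

Lemma rho_prod : \sum_(z : {ffun 'I_n -> 'I_K}) \prod_i rho (z i) = 1.
Proof.
have -> : \sum_(z : {ffun 'I_n -> 'I_K}) \prod_i rho (z i) = \prod_(i : 'I_n) \sum_k rho k
  by rewrite bigA_distr_bigA.
by rewrite big1.
Qed.

Lemma rho_prod_ge0 (z : {ffun 'I_n -> 'I_K}) : 0 <= \prod_i rho (z i).
Proof. by apply: prodr_ge0 => i _. Qed.

Lemma hp (z : {ffun 'I_n -> 'I_K}) : forall i j, 0 <= Pmat B gamma z i j <= 1.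
Proof.
move=> i j; rewrite /Pmat; apply/andP; split.
  by apply: mulr_ge0 => //; apply: ltW.
rewrite -[1]mulr1; apply: ler_pM => //; apply: ltW => //.
Qed.

Lemma pmf_ge0 (w : sbm_outcome n K) : 0 <= sbm_pmf rho B gamma w.
Proof.
rewrite pmf_eq; apply: mulr_ge0; first exact: rho_prod_ge0.
by apply: prodr_ge0 => ij _; apply: qf_ge0; exact: hp.
Qed.

Lemma total : \sum_(w : sbm_outcome n K) sbm_pmf rho B gamma w = 1.
Proof.
rewrite split_sum.
under eq_bigr => z _.
  under eq_bigr do rewrite pmf_eq /=.
  rewrite -mulr_sumr.
  rewrite (@L1 R _ (fun ij b => qf (Pmat B gamma z) ij.1 ij.2 b)).
  rewrite [X in _ * X]big1 ?mulr1; last by move=> ij _; apply: qf_sum.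
  over.
exact: rho_prod.
Qed.

Lemma mgf (i1 i2 : 'I_n) (lam : R) : i1 != i2 -> `|lam| <= 2^-1 ->
  \sum_(w : sbm_outcome n K) sbm_pmf rho B gamma w * expR (lam * Ssum w i1 i2)
  <= \prod_(j : 'I_n | (j != i1) && (j != i2)) (1 + lam ^+ 2 / 8).
Proof.
move=> h12 hlam.
rewrite split_sum.
apply: (@le_trans _ _ (\sum_(z : {ffun 'I_n -> 'I_K}) (\prod_i rho (z i)) *
   \prod_(j : 'I_n | (j != i1) && (j != i2)) (1 + lam ^+ 2 / 8))).
  apply: ler_sum => z _.
  under [X in X <= _]eq_bigr => A _ do rewrite (pmf_eq (z, A)) /= -mulrA.
  rewrite -mulr_sumr; apply: ler_wpM2l; first exact: rho_prod_ge0.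
  exact: (@inner_bound R _ _ (hp z) i1 i2 lam h12 hlam).
by rewrite -mulr_suml rho_prod mul1r.
Qed.


Lemma sco (c : R) : \sum_(i < n) c = c *+ n.
Proof. by rewrite -[in RHS](card_ord n) -sumr_const. Qed.

Lemma scoC (j : 'I_n) (c : R) : \sum_(i < n | i != j) c = c *+ n.-1.
Proof. rewrite -[in RHS](card_ord n) -(cardC1 j) -sumr_const; apply: eq_bigl => i. by rewrite !inE. Qed.

Lemma cardJ (i1 i2 : 'I_n) : i1 != i2 ->
  #|[pred j : 'I_n | (j != i1) && (j != i2)]| = (n - 2)%N.
Proof.
move=> h.
have h1 := cardC1 i1; rewrite card_ord in h1.
have h2 := cardD1 i2 (predC1 i1).
rewrite inE eq_sym h /= in h2.
have -> : #|[pred j : 'I_n | (j != i1) && (j != i2)]| = #|[predD1 predC1 i1 & i2]|.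
  by apply: eq_card => j; rewrite !inE andbC.
rewrite h1 -subn1 in h2; have -> : (n - 2 = n - 1 - 1)%N by rewrite -subnDA. by rewrite h2 addKn.
Qed.

Lemma prodJ (i1 i2 : 'I_n) (x : R) : i1 != i2 ->
  \prod_(j : 'I_n | (j != i1) && (j != i2)) x = x ^+ (n - 2).
Proof.
move=> h; rewrite -(@cardJ i1 i2 h) -prodr_const; apply: eq_bigl => j; by rewrite inE.
Qed.

Lemma sumJ (i1 i2 : 'I_n) (x : R) : i1 != i2 ->
  \sum_(j : 'I_n | (j != i1) && (j != i2)) x = x *+ (n - 2).
Proof.
move=> h; rewrite -(@cardJ i1 i2 h) -sumr_const; apply: eq_bigl => j; by rewrite inE.
Qed.

Lemma Mstat_sym (w : sbm_outcome n K) i1 i2 : Mstat B gamma w i1 i2 = Mstat B gamma w i2 i1.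
Proof.
rewrite /Mstat; congr (_ * `| _ |); apply: eq_big => j; first by rewrite andbC.
by move=> _; rewrite mulrC.
Qed.

Lemma Mstat_le1 (w : sbm_outcome n K) i1 i2 : i1 != i2 -> Mstat B gamma w i1 i2 <= 1.
Proof.
move=> h; rewrite /Mstat.
have hS : `|Ssum w i1 i2| <= (n - 2)%:R.
  apply: le_trans (ler_norm_sum _ _ _) _.
  rewrite -(@sumJ i1 i2 1 h); apply: ler_sum => j _.
  rewrite normrM -[1]mulr1; apply: ler_pM => //.
    have := hp w.1 i1 j; rewrite ler_norml /Aent; case: (w.2 (i1, j)) => /= /andP[]; lra.
  have := hp w.1 i2 j; rewrite ler_norml /Aent; case: (w.2 (i2, j)) => /= /andP[]; lra.
change (\sum_(j : 'I_n | (j != i1) && (j != i2))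
       (Aent w.2 i1 j - Pmat B gamma w.1 i1 j) * (Aent w.2 i2 j - Pmat B gamma w.1 i2 j))
  with (Ssum w i1 i2).
have [m0|m0] := eqVneq ((n - 2)%:R : R) 0.
  by rewrite m0 invr0 mul0r.
have mpos : 0 < ((n - 2)%:R : R) by rewrite lt0r m0 /=.
rewrite mulrC ler_pdivrMr // mul1r //.
Qed.


Lemma real_choice (m eps : R) : 0 <= m -> 0 < eps -> eps <= 1 ->
  exists lam : R, [/\ 0 < lam, lam <= 2^-1 &
    m * (lam ^+ 2 / 8) - lam * (m * eps) <= - ((2^-1 * m * eps ^+ 2) / (1 + 3^-1 * eps))].
Proof.
move=> hm he0 he1.
have hd : 0 < 1 + 3^-1 * eps by lra.
suff [lam [l0 l1 hl]] : exists lam : R, [/\ 0 < lam, lam <= 2^-1 &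
    (2^-1 * eps ^+ 2) / (1 + 3^-1 * eps) <= lam * eps - lam ^+ 2 / 8].
  exists lam; split => //.
  have -> : (2^-1 * m * eps ^+ 2) / (1 + 3^-1 * eps) = m * ((2^-1 * eps ^+ 2) / (1 + 3^-1 * eps)) by ring.
  have := ler_wpM2l hm hl.
  have -> : m * (lam * eps - lam ^+ 2 / 8) = - (m * (lam ^+ 2 / 8) - lam * (m * eps)) by ring.
  lra.
have [hs|hs] := lerP eps 4^-1.
  exists (2 * eps); split; [lra|lra|].
  rewrite ler_pdivrMr //.
  have h2 : 0 <= eps ^+ 2 by apply: sqr_ge0.
  have : 0 <= eps ^+ 2 * eps by apply: mulr_ge0 => //; lra.
  have -> : (2 * eps * eps - (2 * eps) ^+ 2 / 8) * (1 + 3^-1 * eps) = (3 / 2) * eps ^+ 2 + 2^-1 * (eps ^+ 2 * eps) by field.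
  lra.
exists 2^-1; split; [lra|lra|].
rewrite ler_pdivrMr //.
have : 0 <= (eps - 4^-1) * (1 - eps) by apply: mulr_ge0; lra.
nra.
Qed.

Lemma markov_pt (w : sbm_outcome n K) (i1 i2 : 'I_n) (eps lam : R) : 0 < eps -> 0 <= lam ->
  (((eps <= Mstat B gamma w i1 i2)%R : bool)%:R : R) <=
    expR (lam * Ssum w i1 i2 - lam * ((n - 2)%:R * eps))
  + expR ((- lam) * Ssum w i1 i2 - lam * ((n - 2)%:R * eps)).
Proof.
move=> he hl.
have e1 := expR_ge0 (lam * Ssum w i1 i2 - lam * ((n - 2)%:R * eps)).
have e2 := expR_ge0 ((- lam) * Ssum w i1 i2 - lam * ((n - 2)%:R * eps)).
case: (boolP (eps <= Mstat B gamma w i1 i2)%R) => h /=; last by rewrite mulr0n; lra.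
rewrite mulr1n.
set m : R := (n - 2)%:R.
set S := Ssum w i1 i2.
have hS : m * eps <= `|S|.
  move: h; rewrite /Mstat.
  change (\sum_(j : 'I_n | (j != i1) && (j != i2))
       (Aent w.2 i1 j - Pmat B gamma w.1 i1 j) * (Aent w.2 i2 j - Pmat B gamma w.1 i2 j))
  with (Ssum w i1 i2); rewrite -/S -/m.
  have [m0|m0] := eqVneq m 0.
    by rewrite m0 invr0 mul0r; lra.
  have mpos : 0 < m by rewrite lt0r m0 /= /m.
  by rewrite mulrC ler_pdivlMr // mulrC.
have [hS0|hS0] := lerP 0 S.
  rewrite ger0_norm // in hS.
  have : 0 <= lam * (S - m * eps) by apply: mulr_ge0; lra.
  have := expR_ge1Dx (lam * S - lam * (m * eps)).
  have -> : lam * S - lam * (m * eps) = lam * (S - m * eps) by ring.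
  lra.
rewrite ltr0_norm // in hS.
have : 0 <= lam * (- S - m * eps) by apply: mulr_ge0; lra.
have := expR_ge1Dx ((- lam) * S - lam * (m * eps)).
have -> : (- lam) * S - lam * (m * eps) = lam * (- S - m * eps) by ring.
lra.
Qed.


Lemma pair_bound (i1 i2 : 'I_n) (eps : R) : i1 != i2 -> 0 < eps ->
  \sum_(w : sbm_outcome n K) sbm_pmf rho B gamma w * (((eps <= Mstat B gamma w i1 i2)%R : bool)%:R)
  <= 2 * expR (- ((2^-1 * (n - 2)%:R * eps ^+ 2) / (1 + 3^-1 * eps))).
Proof.
move=> h12 he.
have hX := expR_ge0 (- ((2^-1 * (n - 2)%:R * eps ^+ 2) / (1 + 3^-1 * eps))).
have [he1|he1] := lerP eps 1; last first.
  rewrite big1; first lra.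
  move=> w _; have := @Mstat_le1 w i1 i2 h12.
  case: (boolP (eps <= Mstat B gamma w i1 i2)%R) => h /=.
    by move=> H; lra.
  by rewrite mulr0n mulr0.
set m : R := (n - 2)%:R.
have hm : 0 <= m by apply: ler0n.
have [lam [l0 l1 hl]] := @real_choice m eps hm he he1.
apply: (@le_trans _ _ (\sum_(w : sbm_outcome n K) sbm_pmf rho B gamma w *
     (expR (lam * Ssum w i1 i2 - lam * (m * eps)) + expR ((- lam) * Ssum w i1 i2 - lam * (m * eps))))).
  apply: ler_sum => w _; apply: ler_wpM2l; first exact: pmf_ge0.
  exact: (@markov_pt w i1 i2 eps lam he (ltW l0)).
have E (w : sbm_outcome n K) : sbm_pmf rho B gamma w *
     (expR (lam * Ssum w i1 i2 - lam * (m * eps)) + expR ((- lam) * Ssum w i1 i2 - lam * (m * eps)))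
   = (sbm_pmf rho B gamma w * expR (lam * Ssum w i1 i2)) * expR (- (lam * (m * eps)))
   + (sbm_pmf rho B gamma w * expR ((- lam) * Ssum w i1 i2)) * expR (- (lam * (m * eps))).
  by rewrite !expRD; ring.
under eq_bigr do rewrite E.
rewrite big_split /= -!mulr_suml.
have hl1 : `|lam| <= 2^-1 by rewrite ger0_norm // ltW.
have hl2 : `|- lam| <= 2^-1 by rewrite normrN ger0_norm // ltW.
have M1 := @mgf i1 i2 lam h12 hl1.
have M2 := @mgf i1 i2 (- lam) h12 hl2.
rewrite prodJ // in M1; rewrite prodJ // in M2.
rewrite sqrrN in M2.
have hC : (1 + lam ^+ 2 / 8) ^+ (n - 2) <= expR (m * (lam ^+ 2 / 8)).
  rewrite /m expRM_natl; apply: lerXn2r.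
  - rewrite qualifE /=; have := sqr_ge0 lam; lra.
  - by rewrite qualifE /= expR_ge0.
  - exact: expR_ge1Dx.
have hE := expR_ge0 (- (lam * (m * eps))).
apply: (@le_trans _ _ (2 * (expR (m * (lam ^+ 2 / 8)) * expR (- (lam * (m * eps)))))).
  rewrite -mulrDl [X in _ <= X]mulrA; apply: ler_wpM2r => //. move: M1 M2 hC. rewrite /m. lra.
rewrite -expRD; apply: ler_wpM2l => //; rewrite ler_expR.
exact: hl.
Qed.


Lemma notE_pt (w : sbm_outcome n K) (eps : R) : ~~ maxM_lt B gamma eps w ->
  1 <= 2^-1 * \sum_(i1 : 'I_n) \sum_(i2 : 'I_n | i2 != i1)
          (((eps <= Mstat B gamma w i1 i2)%R : bool)%:R : R).
Proof.
rewrite /maxM_lt => /forallPn [a /forallPn [b]]; rewrite negb_imply -leNgt => /andP [hab hM].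
have hM' : eps <= Mstat B gamma w b a by rewrite Mstat_sym.
have Fge0 (i : 'I_n) : 0 <= \sum_(i2 : 'I_n | i2 != i)
          (((eps <= Mstat B gamma w i i2)%R : bool)%:R : R).
  by apply: sumr_ge0 => j _; apply: ler0n.
have Fa : 1 <= \sum_(i2 : 'I_n | i2 != a) (((eps <= Mstat B gamma w a i2)%R : bool)%:R : R).
  rewrite (bigD1 b) /=; last by rewrite eq_sym.
  rewrite hM mulr1n lerDl; apply: sumr_ge0 => j _; apply: ler0n.
have Fb : 1 <= \sum_(i2 : 'I_n | i2 != b) (((eps <= Mstat B gamma w b i2)%R : bool)%:R : R).
  rewrite (bigD1 a) /=; last by [].
  rewrite hM' mulr1n lerDl; apply: sumr_ge0 => j _; apply: ler0n.
rewrite (bigD1 a) //= [X in _ + X](bigD1 b) /=; last by rewrite eq_sym.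
have : 0 <= \sum_(i | (i != a) && (i != b)) \sum_(i2 : 'I_n | i2 != i)
          (((eps <= Mstat B gamma w i i2)%R : bool)%:R : R).
  by apply: sumr_ge0 => i _.
lra.
Qed.

Lemma part1 (eps : R) : 0 < eps ->
  1 - (n * (n - 1))%:R *
      expR (- ((2^-1 * (n - 2)%:R * eps ^+ 2) / (1 + 3^-1 * eps)))
    <= @sbm_prob R n K rho B gamma (@maxM_lt R n K B gamma eps).
Proof.
move=> he.
set X := expR (- ((2^-1 * (n - 2)%:R * eps ^+ 2) / (1 + 3^-1 * eps))).
rewrite /sbm_prob.
have T := total; rewrite (bigID (maxM_lt B gamma eps)) /= in T.
suff : \sum_(w : sbm_outcome n K | ~~ maxM_lt B gamma eps w) sbm_pmf rho B gamma w <= (n * (n - 1))%:R * X.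
  by move=> H; lra.
rewrite big_mkcond /=.
apply: (@le_trans _ _ (\sum_(w : sbm_outcome n K) sbm_pmf rho B gamma w *
   (2^-1 * \sum_(i1 : 'I_n) \sum_(i2 : 'I_n | i2 != i1)
          (((eps <= Mstat B gamma w i1 i2)%R : bool)%:R : R)))).
  apply: ler_sum => w _; case: ifP => hE.
    rewrite -[X in X <= _]mulr1; apply: ler_wpM2l; first exact: pmf_ge0.
    exact: notE_pt.
  apply: mulr_ge0; first exact: pmf_ge0.
  apply: mulr_ge0; first lra.
  apply: sumr_ge0 => i _; apply: sumr_ge0 => j _; apply: ler0n.
under eq_bigr => w _ do rewrite mulrCA mulr_sumr.
rewrite -mulr_sumr exchange_big /=.
under eq_bigr => i1 _ do under eq_bigr => w _ do rewrite mulr_sumr.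
under eq_bigr => i1 _ do rewrite exchange_big /=.
apply: (@le_trans _ _ (2^-1 * \sum_(i1 : 'I_n) \sum_(i2 : 'I_n | i2 != i1) (2 * X))).
  apply: ler_wpM2l; first lra.
  apply: ler_sum => i1 _; apply: ler_sum => i2 hi.
  by apply: pair_bound => //; rewrite eq_sym.
under eq_bigr => i1 _ do rewrite scoC.
rewrite sco -mulrnA -mulr_natr -subn1 mulnC.
set N : R := (n * (n - 1))%:R.
rewrite le_eqVlt; apply/orP; left; apply/eqP; by field.
Qed.

End SBM.

Lemma part2 (R : realType) (n : nat) (eps : R) : 0 < eps -> (4 <= n)%N ->
   1 - (n * (n - 1))%:R * expR (- ((4^-1 * n%:R * eps ^+ 2) / (1 + eps)))
   <= 1 - (n * (n - 1))%:R *
      expR (- ((2^-1 * (n - 2)%:R * eps ^+ 2) / (1 + 3^-1 * eps))).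
Proof.
move=> he h4.
have hc : 0 <= ((n * (n - 1))%:R : R) by apply: ler0n.
suff : expR (- ((2^-1 * (n - 2)%:R * eps ^+ 2) / (1 + 3^-1 * eps)))
       <= expR (- ((4^-1 * n%:R * eps ^+ 2) / (1 + eps))).
  move=> H; have := ler_wpM2l hc H; lra.
rewrite ler_expR lerN2.
have h2 : (2 <= n)%N by apply: leq_trans h4.
rewrite natrB //.
have hx : (4 : R) <= n%:R by rewrite (ler_nat R 4 n).
set x : R := n%:R.
rewrite ler_pdivrMr; last lra.
rewrite [X in _ <= X]mulrAC ler_pdivlMr; last lra.
have e2 : 0 <= eps ^+ 2 by apply: sqr_ge0.
have t1 : 0 <= eps ^+ 2 * (x - 4) by apply: mulr_ge0; lra.
have t2 : 0 <= eps ^+ 2 * eps * (x - 4) by apply: mulr_ge0; [apply: mulr_ge0; lra| lra].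
have t3 : 0 <= eps ^+ 2 * eps by apply: mulr_ge0; lra.
have E : 2^-1 * (x - 2) * eps ^+ 2 * (1 + eps) - 4^-1 * x * eps ^+ 2 * (1 + 3^-1 * eps)
  = 4^-1 * (eps ^+ 2 * (x - 4)) + (5 / 12) * (eps ^+ 2 * eps * (x - 4)) + (2 / 3) * (eps ^+ 2 * eps).
  by field.
lra.
Qed.

Theorem lemma6 (R : realType) (n K : nat) (rho : 'I_K -> R)
  (B : 'I_K -> 'I_K -> R) (gamma eps : R)
  (rho_ge0 : forall k, 0 <= rho k) (rho_sum1 : \sum_(k : 'I_K) rho k = 1)
  (B_ge0 : forall k l, 0 <= B k l) (B_le1 : forall k l, B k l <= 1)
  (gamma_gt0 : 0 < gamma) (gamma_le1 : gamma <= 1)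
  (eps_gt0 : 0 < eps) :
  1 - (n * (n - 1))%:R *
      expR (- ((2^-1 * (n - 2)%:R * eps ^+ 2) / (1 + 3^-1 * eps)))
    <= @sbm_prob R n K rho B gamma (@maxM_lt R n K B gamma eps)
  /\
  ((4 <= n)%N ->
   1 - (n * (n - 1))%:R * expR (- ((4^-1 * n%:R * eps ^+ 2) / (1 + eps)))
   <= 1 - (n * (n - 1))%:R *
      expR (- ((2^-1 * (n - 2)%:R * eps ^+ 2) / (1 + 3^-1 * eps)))).
Proof.
split.
  by apply: part1.
exact: part2.
Qed.
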